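(* Fix $R>0$ and an integer $k\ge2$. There exist a sequence $(\mathbb{X}_n,d_n,\nu_n)_{n\in\mathbb{N}}$ of complete separable metric spaces with locally finite Borel measures satisfying Assumption (A), pure $k$-body repulsive symmetric potentials $\phi^{(n)}$ on $\mathbb{X}_n$ of range at most $R$, bounded measurable sets $\Lambda_n\subseteq\mathbb{X}_n$, and reals $\lambda_n>0$, such that (1) $B_R^{(n)}:=\sup_{x\in\mathbb{X}_n}\nu_n(\{y\in\mathbb{X}_n: d_n(x,y)\le R\})$ satisfies $B_R^{(n)}\to\infty$ as $n\to\infty$; (2) $\lambda_n=O\!\left(\frac{\log B_R^{(n)}}{B_R^{(n)}}\right)$; and (3) $Z_{\Lambda_n,\phi^{(n)}}(-\lambda_n)=0$ for every $n$.
   Context: Assumption (A) on $(\mathbb{X},d,\nu)$: for every $x\in\mathbb{X}$, the push-forward of $\nu$ under $y\mapsto d(x,y)$ is absolutely continuous with respect to Lebesgue measure on $\mathbb{R}$. A potential $\phi=(\phi_m)_{m\in\mathbb{N}}$ is a family of measurable $\phi_m:\mathbb{X}^m\to\mathbb{R}\cup\{\infty\}$, written $\phi(\mathbf{x})=\phi_m(\mathbf{x})$; symmetric: invariant under coordinate permutations; repulsive: $\phi_m\ge0$; range at most $R$: $\phi(\mathbf{x})=0$ whenever $\max_{i,j}d(x_i,x_j)>R$; pure $k$-body: $\phi_m=0$ for all $m\ne k$. For $\mathbf{x}\in\mathbb{X}^m$, $S\subseteq[m]$, $\mathbf{x}_S=(x_i)_{i\in S}$; $H(\mathbf{x})=\sum_{\emptyset\ne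 S\subseteq[m]}\phi(\mathbf{x}_S)$; $Z_{\Lambda,\phi}(\lambda)=\sum_{m\ge0}\frac{\lambda^m}{m!}\int_{\Lambda^m}e^{-H(\mathbf{x})}\nu^m(d\mathbf{x})$ with $e^{-\infty}=0$. *)

(* Defs.v *)
From HB Require Import structures.
From mathcomp Require Import all_boot all_order all_algebra.
From mathcomp Require Import all_classical all_reals all_analysis.
From mathcomp Require Import measurable_realfun.

Set Implicit Arguments.
Unset Strict Implicit.
Unset Printing Implicit Defensive.

Import Order.TTheory GRing.Theory Num.Theory.
Import numFieldNormedType.Exports.
Local Open Scope classical_set_scope.
Local Open Scope ring_scope.

Section MetricMeasure.
Variable R : realType.

Section Metric.
Variables (T : Type) (d : T -> T -> R).

Definition is_metric : Prop :=
  [/\ forall x y, 0 <= d x y,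
      forall x y, d x y = 0 <-> x = y,
      forall x y, d x y = d y x &
      forall x y z, d x z <= d x y + d y z].

Definition dball (x : T) (r : R) : set T := [set y | d x y < r].
Definition dcball (x : T) (r : R) : set T := [set y | d x y <= r].

Definition dopen : set (set T) :=
  [set U | forall x, U x -> exists2 r, 0 < r & dball x r `<=` U].

Definition metric_complete : Prop :=
  forall u : nat -> T,
    (forall e, 0 < e -> exists N, forall p q, (N <= p)%N -> (N <= q)%N ->
        d (u p) (u q) < e) ->
    exists x, forall e, 0 < e -> exists N, forall n, (N <= n)%N -> d (u n) x < e.

Definition metric_separable : Prop :=
  exists D : set T, countable D /\
    forall x e, 0 < e -> exists2 y, D y & d x y < e.

Definition dbounded (A : set T) : Prop :=
  exists x r, A `<=` dball x r.

End Metric.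

Notation borel_of d := (g_sigma_algebraType (dopen d)).

(* product sigma-algebra on m-tuples: generated by measurable rectangles *)
Definition tuple_rect (dX : measure_display) (X : measurableType dX) (m : nat)
  : set (set (m.-tuple X)) :=
  [set A | exists B : 'I_m -> set X, (forall i, measurable (B i)) /\
             A = [set t | forall i, B i (tnth t i)]].

Section OnSpace.
Variables (T : pointedType) (d : T -> T -> R).
Variable nu : {measure set (borel_of d) -> \bar R}.

Definition locally_finite : Prop :=
  forall x : T, exists2 r, 0 < r & (nu (dball d x r) < +oo)%E.

(* Assumption (A): push-forward of nu under y |-> d(x,y) is absolutely
   continuous w.r.t. Lebesgue measure on (the Borel sets of) R *)
Definition assumptionA : Prop :=
  forall (x : T) (A : set (measurableTypeR R)),
    measurable A -> lebesgue_measure A = 0%E ->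
    nu [set y : borel_of d | A (d x y)] = 0%E.

(* A potential is given as a function on finite configurations
   (seq T), phi_m being its restriction to sequences of size m. *)
Definition potential_measurable (phi : seq T -> \bar R) : Prop :=
  forall (m : nat) (E : set (\bar R)), measurable E ->
    <<s @tuple_rect _ (borel_of d) m >> [set t : m.-tuple (borel_of d) | E (phi t)].

Definition potential_symmetric (phi : seq T -> \bar R) : Prop :=
  forall s s' : seq T, perm_eq s s' -> phi s = phi s'.

Definition potential_repulsive (phi : seq T -> \bar R) : Prop :=
  forall s, (0 <= phi s)%E.

Definition potential_range_le (Rr : R) (phi : seq T -> \bar R) : Prop :=
  forall s, (exists x y, [/\ x \in s, y \in s & Rr < d x y]) -> phi s = 0%E.

Definition potential_pure (k : nat) (phi : seq T -> \bar R) : Prop :=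
  forall s, size s != k -> phi s = 0%E.

Definition hamiltonian (phi : seq T -> \bar R) (s : seq T) : \bar R :=
  (\sum_(b : (size s).-tuple bool | has id b) phi (mask b s))%E.

(* iterated integral over L^m:  int_L ... int_L f(x_1,...,x_m) dnu ... dnu
   (equal to the integral against nu^m on L^m by Tonelli, f >= 0) *)
Fixpoint iter_integral (L : set T) (m : nat) (f : seq T -> \bar R) : \bar R :=
  match m with
  | 0%N => f [::]
  | m'.+1 => (\int[nu]_(x in (L : set (borel_of d)))
                 iter_integral L m' (fun s => f (x :: s)))%E
  end.

Definition Z_coeff (phi : seq T -> \bar R) (L : set T) (m : nat) : \bar R :=
  iter_integral L m (fun s => expeR (- hamiltonian phi s)).

Definition partition_function_zero (phi : seq T -> \bar R) (L : set T) (z : R)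
  : Prop :=
  (forall m, Z_coeff phi L m \is a fin_num) /\
  ((fun N => \sum_(m < N) z ^+ m / (m`!)%:R * fine (Z_coeff phi L m))
     @ \oo --> (0 : R)).

Definition ball_volume_sup (Rr : R) : \bar R :=
  ereal_sup (range (fun x : T => nu (dcball d x Rr))).

End OnSpace.
End MetricMeasure.

Notation borel_of d := (g_sigma_algebraType (dopen d)).

(* Main.v *)
Require Import Defs.
From HB Require Import structures.
From mathcomp Require Import all_boot all_order all_algebra.
From mathcomp Require Import all_classical all_reals all_analysis.
From mathcomp Require Import measurable_realfun.
From mathcomp Require Import ring lra zify.
From Stdlib Require Import Lia.

Import Order.TTheory GRing.Theory Num.Theory.
Import numFieldNormedType.Exports.
Local Open Scope classical_set_scope.
Local Open Scope ring_scope.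

Module P1.
Unset Implicit Arguments.
Set Strict Implicit.
Local Open Scope classical_set_scope.
Local Open Scope ring_scope.
Section S1.
Variable R : realType.
Local Open Scope ereal_scope.

Definition dR (x y : R) : R := `|x - y|%R.

Lemma dopen_open (U : set R) (H : dopen dR U) : open U.
Proof.
rewrite openE /interior => x Ux; have [r r0 sub] := H x Ux.
apply/nbhs_ballP; exists r => //= y; rewrite -ball_normE /= => hy; exact: sub.
Qed.

Lemma sigma_sub (A : set R) : <<s dopen dR >> A -> measurable A.
Proof.
apply: smallest_sub; first exact: sigma_algebra_measurable.
by move=> U /dopen_open/open_measurable.
Qed.

Definition nuF (n : nat) (A : set (borel_of dR)) : \bar R :=
  ((n.+1)%:R)%:E * lebesgue_measure (A : set R).

Let nuF0 n : nuF n set0 = 0.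
Proof. by rewrite /nuF measure0 mule0. Qed.

Let nuF_ge0 n B : 0 <= nuF n B.
Proof. by rewrite /nuF mule_ge0. Qed.

Let nuF_sigma n : semi_sigma_additive (nuF n).
Proof.
move=> F mF tF mUF; rewrite [X in X @ \oo --> _](_ : _ =
    (fun m => ((n.+1)%:R)%:E * \sum_(0 <= i < m) lebesgue_measure (F i : set R))); last first.
  by apply/funext => k; rewrite ge0_sume_distrr.
apply: cvgeZl => //; apply: (@measure_semi_sigma_additive _ _ _ lebesgue_measure).
- by move=> i; apply: sigma_sub; apply: mF.
- exact: tF.
- exact: sigma_sub.
Qed.

HB.instance Definition _ n := isMeasure.Build _ _ _ (nuF n)
  (nuF0 n) (nuF_ge0 n) (nuF_sigma n).

End S1.

End P1.
Import P1.

Module P2.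
Unset Implicit Arguments.
Set Strict Implicit.
Local Open Scope classical_set_scope.
Local Open Scope ring_scope.
Section S2.
Variable R : realType.

Lemma dR_metric : is_metric (@dR R).
Proof.
rewrite /dR; split.
- by move=> x y.
- move=> x y; split; first by move/eqP; rewrite normr_eq0 subr_eq0 => /eqP.
  by move=> ->; rewrite subrr normr0.
- by move=> x y; rewrite distrC.
- move=> x y z; rewrite (_ : x - z = (x - y) + (y - z)); first exact: ler_normD.
  by rewrite addrA subrK.
Qed.

Lemma dR_complete : metric_complete (@dR R).
Proof.
move=> u Hc.
have cu : cvg (u @ \oo).
  apply/cauchy_cvgP/cauchy_ballP => e e0; have [N HN] := Hc e e0.
  rewrite near_map2; exists ([set n | (N <= n)%N], [set n | (N <= n)%N]) => /=.
    by split; exists N.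
  by case=> p q [/= hp hq]; rewrite -ball_normE /=; exact: HN.
exists (lim (u @ \oo)) => e e0.
move/cvgrPdist_lt : cu => /(_ e e0) [N _ HN]; exists N => n hn.
by rewrite /dR distrC; apply: HN.
Qed.

Lemma dR_separable : metric_separable (@dR R).
Proof.
exists (range (@ratr R)); split.
  exact: (card_le_trans (card_image_le _ _) (countableP _)).
move=> x e e0; have [q] := @rat_in_itvoo R (x - e) (x + e) ltac:(lra).
rewrite in_itv /= => /andP[h1 h2]; exists (ratr q); first by exists q.
rewrite /dR ltr_norml; apply/andP; split; lra.
Qed.

End S2.

End P2.
Import P2.

Module P3.
Unset Implicit Arguments.
Set Strict Implicit.
Local Open Scope classical_set_scope.
Local Open Scope ring_scope.
Section S3.
Variable R : realType.
Local Open Scope ereal_scope.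

Lemma nuF_lf n : locally_finite (@nuF R n : {measure set (borel_of (@dR R)) -> \bar R}).
Proof.
move=> x; exists 1%R => //.
rewrite /nuF (_ : dball _ _ _ = ball x 1%R); last first.
  by rewrite -ball_normE.
by rewrite /= /nuF lebesgue_measure_ball// -EFinM ltry.
Qed.

Definition shiftm (c : R) (A : set (measurableTypeR R)) : \bar R :=
  lebesgue_measure ((fun y : R => y + c)%R @^-1` A).

Let mshift (c : R) : measurable_fun [set: measurableTypeR R] (fun y : R => y + c)%R.
Proof. by apply: measurable_funD => //; exact: measurable_cst. Qed.

Let shiftm0 c : shiftm c set0 = 0.
Proof. by rewrite /shiftm preimage_set0 measure0. Qed.

Let shiftm_ge0 c A : 0 <= shiftm c A.
Proof. exact: measure_ge0. Qed.

Let shiftm_sigma c : semi_sigma_additive (shiftm c).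
Proof.
move=> F mF tF mUF; rewrite /shiftm preimage_bigcup.
apply: (@measure_semi_sigma_additive _ _ _ lebesgue_measure).
- by move=> n; rewrite -[X in measurable X]setTI; apply: mshift => //; exact: mF.
- apply/trivIsetP => /= i j _ _ ij; rewrite -preimage_setI.
  by move/trivIsetP : tF => /(_ i j I I ij) ->; rewrite preimage_set0.
- by rewrite -preimage_bigcup -[X in measurable X]setTI; apply: mshift.
Qed.

HB.instance Definition _ c := isMeasure.Build _ _ _ (shiftm c)
  (shiftm0 c) (shiftm_ge0 c) (shiftm_sigma c).

Lemma lebesgue_shift (c : R) (A : set R) : measurable A ->
  lebesgue_measure [set y | A (y + c)%R] = lebesgue_measure A.
Proof.
move=> mA.
change (shiftm c A = lebesgue_measure A).
apply/esym/lebesgue_measure_unique => //= _ [[a b]] _ <-.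
rewrite /shiftm.
have -> : (fun y => y + c)%R @^-1` `]a, b]%classic = `](a - c)%R, (b - c)%R]%classic.
  by apply/seteqP; split => y; rewrite /= !in_itv /= lerBrDr ltrBlDr.
rewrite !lebesgue_measure_itv /= !lte_fin ltrD2r; case: ifP => // _.
by rewrite -!EFinB; congr EFin; lra.
Qed.


Lemma lebesgue_abs_null (x : R) (A : set R) : measurable A ->
  lebesgue_measure A = 0 -> lebesgue_measure [set y | A `|x - y|%R] = 0.
Proof.
move=> mA A0.
pose A' := [set z | A (z + x)%R].
have mA' : measurable A'.
  by rewrite /A' -[X in measurable X]setTI; apply: mshift.
have hA' : lebesgue_measure A' = 0 by rewrite lebesgue_shift.
pose Q1 := [set y : R | A' (- y)%R].
pose Q2 := [set y : R | A (y + - x)%R].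
have hQ1 : lebesgue_measure Q1 = 0.
  by have := lebesgue_measureN mA'; rewrite /pushforward => ->.
have hQ2 : lebesgue_measure Q2 = 0 by rewrite lebesgue_shift.
have mQ1 : measurable Q1.
  rewrite /Q1 -[X in measurable X]setTI.
  by apply: oppr_measurable.
have mQ2 : measurable Q2 by rewrite /Q2 -[X in measurable X]setTI; apply: mshift.
have mP : measurable [set y | A `|x - y|%R].
  have mf : measurable_fun [set: R] (Num.Def.normr \o (fun y : R => (x - y)%R)).
    apply: measurableT_comp; first exact: normr_measurable.
    by apply: measurable_funB => //; exact: measurable_cst.
  by rewrite -[X in measurable X]setTI; apply: mf.
have sub : [set y | A `|x - y|%R] `<=` Q1 `|` Q2.
  move=> y /=; have [h|h] := leP 0%R (x - y)%R.
    by rewrite ger0_norm// => hA; left; rewrite /Q1 /A' /=; rewrite addrC.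
  by rewrite ltr0_norm// opprB => hA; right; rewrite /Q2 /=.
apply/eqP; rewrite eq_le measure_ge0 andbT.
have h1 : lebesgue_measure [set y | A `|x - y|%R] <= lebesgue_measure (Q1 `|` Q2).
  by apply: le_measure => //; rewrite inE //; exact: measurableU.
apply: (le_trans h1).
apply: (le_trans (measureU2 _ _ _)) => //=.
by rewrite [X in X + _]hQ1 [X in _ + X]hQ2 adde0.
Qed.

End S3.

End P3.
Import P3.

Module P4.
Unset Implicit Arguments.
Set Strict Implicit.
Local Open Scope classical_set_scope.
Local Open Scope ring_scope.
Section S4.
Variable R : realType.
Variable w : R.
Hypothesis w0 : (0 < w)%R.

Notation X := (borel_of (@dR R)).

Definition cellA : set R := [set` `](- w)%R, 0%R[].
Definition cellB : set R := [set` `]0%R, w[].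

Definition chi (y : R) : nat :=
  if y \in `](- w)%R, 0%R[ then 0%N else if y \in `]0%R, w[ then 1%N else 2%N.

Lemma dopen_itvoo (a b : R) : dopen (@dR R) [set` `]a, b[].
Proof.
move=> y /=; rewrite in_itv /= => /andP[ay yb].
exists (Num.min (y - a) (b - y))%R; first by rewrite lt_min !subr_gt0 ay yb.
move=> z; rewrite /dball /dR /= lt_min => /andP[h1 h2]; rewrite in_itv /=.
move: h1 h2; rewrite !ltr_norml => /andP[h1 h2] /andP[h3 h4].
apply/andP; split; lra.
Qed.

Lemma mitvoo (a b : R) : measurable ([set` `]a, b[] : set X).
Proof. by apply: sub_sigma_algebra; apply: dopen_itvoo. Qed.

Lemma mcellA : measurable (cellA : set X). Proof. exact: mitvoo. Qed.
Lemma mcellB : measurable (cellB : set X). Proof. exact: mitvoo. Qed.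

Lemma chi_pre (j : nat) : measurable (chi @^-1` [set j] : set X).
Proof.
case: j => [|[|[|j]]].
- have -> : chi @^-1` [set 0%N] = cellA.
    apply/seteqP; split => y; rewrite /chi /cellA /=;
    by case: (y \in `](- w)%R, 0%R[); case: (y \in `]0%R, w[).
  exact: mcellA.
- have -> : chi @^-1` [set 1%N] = cellB `\` cellA.
    apply/seteqP; split => y; rewrite /chi /cellA /cellB /=;
    by case: (y \in `](- w)%R, 0%R[); case: (y \in `]0%R, w[) => //= -[].
  by apply: measurableD; [exact: mcellB|exact: mcellA].
- have -> : chi @^-1` [set 2%N] = ~` (cellA `|` cellB).
    apply/seteqP; split => y; rewrite /chi /cellA /cellB /=;
    case: (y \in `](- w)%R, 0%R[); case: (y \in `]0%R, w[) => //=.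
    + by move=> _ [].
    + by move=> h; exfalso; apply: h; left.
    + by move=> h; exfalso; apply: h; left.
    + by move=> h; exfalso; apply: h; right.
  by apply: measurableC; apply: measurableU; [exact: mcellA|exact: mcellB].
- have -> : chi @^-1` [set j.+3] = set0.
    apply/seteqP; split => y; rewrite /chi /=; last by [].
    by case: (y \in `](- w)%R, 0%R[); case: (y \in `]0%R, w[).
  exact: measurable0.
Qed.

Lemma measurable_fun_chi (T : Type) (g : nat -> T) (D : set X) (Y : set T) :
  measurable D -> measurable (D `&` (fun x => g (chi x)) @^-1` Y).
Proof.
move=> mD; apply: measurableI => //.
have -> : (fun x => g (chi x)) @^-1` Y = \bigcup_(j in g @^-1` Y) (chi @^-1` [set j]).
  apply/seteqP; split => y /=.
    by move=> hy; exists (chi y).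
  by move=> [j hj /= ->].
by apply: bigcup_measurable => j _; exact: chi_pre.
Qed.

End S4.

End P4.
Import P4.

Module P5.
Set Implicit Arguments.
Unset Strict Implicit.
Local Open Scope classical_set_scope.
Local Open Scope ring_scope.
Section S5.
Variable R : realType.
Variable w : R.
Hypothesis w0 : (0 < w)%R.
Notation X := (borel_of (@dR R)).
Notation chi := (@chi R w).
Notation cellA := (@cellA R w).
Notation cellB := (@cellB R w).
Variable nu : {measure set X -> \bar R}.
Variables a b : R.
Hypothesis a0 : (0 <= a)%R.
Hypothesis b0 : (0 <= b)%R.
Hypothesis nuA : nu cellA = a%:E.
Hypothesis nuB : nu cellB = b%:E.
Local Open Scope ereal_scope.

Definition Lset : set R := cellA `|` cellB.

Lemma chiA x : cellA x -> chi x = 0%N.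
Proof. by move=> h; rewrite /P4.chi h. Qed.

Lemma chiB x : cellB x -> chi x = 1%N.
Proof.
move=> h; rewrite /P4.chi; case: ifP => [hA|_]; last by rewrite h.
by move: hA h; rewrite /cellB /= !in_itv /= => /andP[_ h1] /andP[h2 _]; exfalso; lra.
Qed.

Lemma disjAB : [disjoint cellA & cellB].
Proof.
apply/disj_setPS => x [hA hB].
by have := chiA hA; rewrite (chiB hB).
Qed.

Lemma Lchi x : Lset x <-> (chi x < 2)%N.
Proof.
split; first by case=> [/chiA|/chiB] ->.
rewrite /P4.chi; case: ifP => hA; first by left.
by case: ifP => hB //; right.
Qed.

Lemma mL : measurable (Lset : set X).
Proof. by apply: measurableU; [exact: mcellA|exact: mcellB]. Qed.

Lemma iter_ge0 m (f : seq R -> \bar R) : (forall s, 0 <= f s) ->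
  0 <= iter_integral nu Lset m f.
Proof.
elim: m f => [|m IH] f hf /=; first exact: hf.
by apply: integral_ge0 => x _; apply: IH.
Qed.

Lemma eq_iter m (f g : seq R -> \bar R) :
  (forall s, size s = m -> all (fun x => chi x < 2)%N s -> f s = g s) ->
  iter_integral nu Lset m f = iter_integral nu Lset m g.
Proof.
elim: m f g => [|m IH] f g hfg /=; first exact: hfg.
apply: eq_integral => x; rewrite inE => /Lchi hx.
apply: IH => s hs hall; apply: hfg => /=; first by rewrite hs.
by rewrite hx.
Qed.

Lemma int_chi (G : nat -> \bar R) : (forall j, 0 <= G j) ->
  \int[nu]_(x in Lset) G (chi x) = G 0%N * a%:E + G 1%N * b%:E.
Proof.
move=> G0; rewrite /Lset ge0_integral_setU //.
  have hA : \int[nu]_(x in cellA) G (chi x) = G 0%N * a%:E.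
    transitivity (\int[nu]_(x in cellA) cst (G 0%N) x).
      by apply: eq_integral => x; rewrite inE => hx; rewrite /= chiA.
    by rewrite integral_cst ?nuA //; exact: mcellA.
  have hB : \int[nu]_(x in cellB) G (chi x) = G 1%N * b%:E.
    transitivity (\int[nu]_(x in cellB) cst (G 1%N) x).
      by apply: eq_integral => x; rewrite inE => hx; rewrite /= chiB.
    by rewrite integral_cst ?nuB //; exact: mcellB.
  by rewrite hA hB.
- exact: mcellA.
- exact: mcellB.
- by move=> mD Y mY; apply: measurable_fun_chi.
- exact: disjAB.
Qed.


Definition J m (f : seq nat -> \bar R) :=
  iter_integral nu Lset m (fun s => f (map chi s)).

Lemma J_S m f : (forall w, 0 <= f w) ->
  J m.+1 f = J m (fun w => f (0%N :: w)) * a%:E + J m (fun w => f (1%N :: w)) * b%:E.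
Proof.
move=> f0; rewrite /J /=.
have := @int_chi (fun j => iter_integral nu Lset m (fun s => f (j :: map chi s))).
by move=> ->// j; apply: iter_ge0.
Qed.

Lemma J_cst m f (c : R) : (0 <= c)%R ->
  (forall w, size w = m -> all (fun j => j < 2)%N w -> f w = c%:E) ->
  (forall w, 0 <= f w) -> J m f = (c * (a + b) ^+ m)%:E.
Proof.
move=> c0; elim: m f => [|m IH] f hf f0.
  by rewrite /J /= hf // expr0 mulr1.
rewrite J_S // !IH //.
- by rewrite -!EFinM -EFinD; congr EFin; rewrite exprS; ring.
- by move=> v hv hall; apply: hf => //=; rewrite hv.
- by move=> v hv hall; apply: hf => //=; rewrite hv.
Qed.

Definition fc (c : nat) (v : seq nat) : \bar R :=
  if (count (pred1 1%N) v + c == 1)%N then 1 else 0.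

Lemma fc_ge0 c v : 0 <= fc c v.
Proof. by rewrite /fc; case: ifP. Qed.

Lemma fc0S c : (fun v => fc c (0%N :: v)) = fc c.
Proof. by apply/funext => v; rewrite /fc /=. Qed.

Lemma fc1S c : (fun v => fc c (1%N :: v)) = fc c.+1.
Proof. by apply/funext => v; rewrite /fc /= add1n addSnnS. Qed.

Lemma J_fc2 j c : (2 <= c)%N -> J j (fc c) = 0.
Proof.
move=> hc; rewrite (@J_cst j (fc c) 0%R) ?mul0r //.
  by move=> v _ _; rewrite /fc; case: eqP => //; lia.
exact: fc_ge0.
Qed.

Lemma J_fc1 j : J j (fc 1) = (a ^+ j)%:E.
Proof.
elim: j => [|j IH]; first by rewrite /J /= /fc /= expr0.
rewrite J_S; last exact: fc_ge0.
by rewrite fc0S fc1S IH J_fc2 // mul0e adde0 -EFinM exprSr.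
Qed.

Lemma J_fc0 j : J j (fc 0) = (j%:R * a ^+ j.-1 * b)%:E.
Proof.
elim: j => [|j IH]; first by rewrite /J /= /fc /= !mul0r.
rewrite J_S; last exact: fc_ge0.
rewrite fc0S fc1S IH J_fc1 -!EFinM -EFinD; congr EFin.
case: j {IH} => [|j] /=; first by rewrite !expr0; ring.
by rewrite exprS; rewrite -[(j.+2)%:R]natr1 -[(j.+1)%:R]natr1; ring.
Qed.

End S5.

End P5.
Import P5.

Module P6.
Set Implicit Arguments.
Unset Strict Implicit.
Local Open Scope classical_set_scope.
Local Open Scope ring_scope.
Section S6.
Variable R : realType.
Variable w : R.
Variable k : nat.
Hypothesis k2 : (2 <= k)%N.
Notation chi := (@chi R w).
Local Open Scope ereal_scope.

Definition bad (v : seq nat) : bool :=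
  [&& size v == k, all (fun j => j < 2)%N v & ~~ (odd k && (count (pred1 1%N) v == 1%N))].

Definition hpot (v : seq nat) : \bar R := if bad v then +oo else 0.

Definition phi (s : seq R) : \bar R := hpot (map chi s).

Definition gval (v : seq nat) : \bar R :=
  if (size v < k)%N then 1 else if size v == k then (if bad v then 0 else 1) else 0.

Lemma hpot_ge0 v : 0 <= hpot v.
Proof. by rewrite /hpot; case: ifP. Qed.

Lemma ham_lt s : (size s < k)%N -> hamiltonian phi s = 0.
Proof.
move=> hs; rewrite /hamiltonian big1 // => b _.
rewrite /phi /hpot /bad size_map size_mask ?size_tuple //.
have : (count id b <= size b)%N by apply: count_size.
rewrite size_tuple => h; have -> : (count id b == k) = false by apply/eqP; lia.
by [].
Qed.

Lemma ham_eq s : size s = k -> hamiltonian phi s = phi s.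
Proof.
move=> hs; rewrite /hamiltonian.
pose b0 : (size s).-tuple bool := [tuple of nseq (size s) true].
rewrite (bigD1 b0) /=; last by rewrite has_nseq hs andbT; lia.
rewrite mask_true // big1 ?adde0 // => b /andP[_ hb].
rewrite /phi /hpot /bad size_map size_mask ?size_tuple //.
case: eqP => // hc; exfalso; move/eqP: hb; apply; apply: val_inj => /=.
have : all (pred1 true) b.
  rewrite (@eq_all _ _ id); first by rewrite all_count hc size_tuple hs.
  by case.
by move/all_pred1P => ->; rewrite size_tuple.
Qed.

Lemma big_oo (s : seq R) (b : (size s).-tuple bool) : has id b ->
  phi (mask b s) = +oo -> hamiltonian phi s = +oo.
Proof.
move=> hb hphi; rewrite /hamiltonian (bigD1 b) //= hphi.
set S := (X in +oo + X).
have h0 : 0 <= S by apply: sume_ge0 => c _; exact: hpot_ge0.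
by rewrite addye //; apply/eqP => h; move: h0; rewrite h.
Qed.


Lemma ham_gt s : (k < size s)%N -> all (fun x => chi x < 2)%N s ->
  hamiltonian phi s = +oo.
Proof.
move=> hs hall.
pose p := take k.+1 s.
have hp : size p = k.+1 by rewrite size_takel.
have pall : all (fun x => chi x < 2)%N p.
  by apply/allP => x /mem_take hx; exact: (allP hall x hx).
set P1 := (fun x => chi x == 1%N).
set c := count P1 p.
have hc y : y \in p -> count P1 (rem y p) = (c - (P1 y))%N.
  move=> yp; move/permP: (perm_to_rem yp) => /(_ P1) /=.
  by rewrite -/c => ->; rewrite addKn.
have [y yp hy] : exists2 y, y \in p & count P1 (rem y p) != 1%N.
  case: (c =P 1%N) => [c1|cn1].
    have : has P1 p by rewrite has_count -/c c1.
    by case/hasP => y yp hy; exists y => //; rewrite hc // hy c1.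
  case: (c =P 2%N) => [c2|cn2].
    have : has (predC P1) p.
      rewrite has_count; have := count_predC P1 p; rewrite hp -/c c2; lia.
    by case/hasP => y yp /= hy; exists y => //; rewrite hc // (negbTE hy) c2.
  have yp : nth 0%R p 0 \in p by apply: mem_nth; rewrite hp.
  exists (nth 0%R p 0) => //; rewrite hc //.
  by case: (P1 _); apply/eqP; lia.
pose q := rem y p.
have hq : subseq q s := subseq_trans (rem_subseq y p) (take_subseq s k.+1).
case/subseqP: hq => m hm hqm.
pose b : (size s).-tuple bool := @Tuple (size s) bool m (introT eqP hm).
have hsq : size q = k by rewrite /q size_rem // hp.
apply: (@big_oo s b).
  by rewrite has_count /= -(size_mask hm) -hqm hsq; lia.
rewrite (_ : mask b s = q) //= /phi /hpot /bad size_map hsq eqxx /=.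
rewrite all_map count_map.
have -> : all (preim chi (fun j : nat => (j < 2)%N)) q.
  by apply/allP => x /mem_rem hx; exact: (allP pall x hx).
by rewrite /= -/P1 (negbTE hy) andbF.
Qed.

Lemma E_val s : all (fun x => chi x < 2)%N s ->
  expeR (- hamiltonian phi s) = gval (map chi s).
Proof.
move=> hall; rewrite /gval size_map.
case: (ltngtP (size s) k) => hs.
- by rewrite ham_lt // oppe0 expeR0.
- by rewrite ham_gt.
- by rewrite ham_eq // /phi /hpot; case: (bad _) => //=; rewrite oppr0 expR0.
Qed.

End S6.

End P6.
Import P6.

Module P7.
Set Implicit Arguments.
Unset Strict Implicit.
Local Open Scope classical_set_scope.
Local Open Scope ring_scope.
Section S7.
Variable R : realType.
Variable Rr : R.
Hypothesis Rr0 : (0 < Rr)%R.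
Variable k : nat.
Notation w := (Rr / 2)%R.
Notation chi := (@chi R w).
Notation X := (borel_of (@dR R)).
Notation phi := (@phi R w k).
Local Open Scope ereal_scope.

Lemma chi_lt2 x : (chi x < 2)%N -> (`|x| < w)%R.
Proof.
rewrite ltr_norml /P4.chi; case: ifP => [|_].
  by rewrite in_itv /= => /andP[h1 h2] _; apply/andP; split; lra.
case: ifP => [|_ //].
by rewrite in_itv /= => /andP[h1 h2] _; apply/andP; split; lra.
Qed.

Lemma phi_sym : potential_symmetric phi.
Proof.
move=> s s' hp; rewrite /P6.phi /hpot /bad.
have hm := perm_map chi hp.
rewrite (perm_size hm) (perm_all _ hm).
by move/permP: hm => ->.
Qed.

Lemma phi_rep : potential_repulsive phi.
Proof. by move=> s; exact: hpot_ge0. Qed.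

Lemma phi_pure : potential_pure k phi.
Proof.
move=> s hs; rewrite /P6.phi /hpot /bad size_map.
by rewrite (negbTE hs).
Qed.

Lemma phi_range : potential_range_le (@dR R) Rr phi.
Proof.
move=> s [x [y [xs ys hxy]]]; rewrite /P6.phi /hpot.
case: ifP => // /and3P[_ hall _]; exfalso.
have hx := chi_lt2 (allP hall _ (map_f chi xs)).
have hy := chi_lt2 (allP hall _ (map_f chi ys)).
move: hxy; rewrite /dR; apply/negP; rewrite -leNgt.
apply: (le_trans (ler_normB _ _)); lra.
Qed.

Lemma phi_meas : potential_measurable (@dR R) phi.
Proof.
move=> m E mE.
pose TT := g_sigma_algebraType (@tuple_rect _ X m).
pose F (v : m.-tuple nat) : set TT :=
  [set t | E (@hpot R k v) /\ forall i, chi (tnth t i) = tnth v i].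
have -> : [set t : m.-tuple X | E (phi t)] = \bigcup_v F v.
  apply/seteqP; split => t /=.
    move=> h; exists (map_tuple chi t) => //; split => // i.
    by rewrite tnth_map.
  move=> [v _ [hv hi]].
  rewrite /P6.phi; suff -> : map chi t = v by [].
  have -> : map chi t = map_tuple chi t by [].
  by congr val; apply: eq_from_tnth => i; rewrite tnth_map hi.
change (measurable (\bigcup_v F v)).
apply: countable_bigcupT_measurable; first exact: countableP.
move=> v; case: (pselect (E (@hpot R k v))) => hv.
  apply: sub_sigma_algebra; exists (fun i => chi @^-1` [set tnth v i]); split.
    by move=> i; apply: chi_pre.
  by apply/seteqP; split => t /=; [case=> _ h i; exact: h|move=> h; split].
have -> : F v = set0 by apply/seteqP; split => t // [].
exact: measurable0.
Qed.

End S7.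

End P7.
Import P7.

From mathcomp Require Import polyrcf.

Module P8.
Set Implicit Arguments.
Unset Strict Implicit.
Local Open Scope classical_set_scope.
Local Open Scope ring_scope.
Section S8.
Variable R : realType.
Variable k : nat.
Hypothesis k2 : (2 <= k)%N.

Definition Ecoef (i : nat) : R :=
  if (i < k)%N then (-2) ^+ i / (i`!)%:R
  else (odd k)%:R * (k%:R * (-1) ^+ k / (k`!)%:R).

Lemma root_exists : exists t0 : R, 0 < t0 /\ \sum_(i < k.+1) Ecoef i * t0 ^+ i = 0.
Proof.
pose N := if odd k then k.+1 else k.
pose p : {poly R} := \poly_(i < N) Ecoef i.
have hp x : p.[x] = \sum_(i < k.+1) Ecoef i * x ^+ i.
  rewrite horner_poly /N; case: ifP => hk //.
  rewrite big_ord_recr /= /Ecoef ltnn hk mul0r mul0r addr0.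
  by apply: eq_bigr.
have p0 : p.[0] = 1.
  rewrite hp big_ord_recl /= expr0 mulr1 big1 ?addr0.
    by rewrite /Ecoef; case: ifP => [_|]; [rewrite expr0 divr1|lia].
  by move=> i _; rewrite expr0n /= mulr0.
have hE : Ecoef N.-1 < 0.
  rewrite /N; case: ifP => hk /=.
    rewrite /Ecoef ltnn hk mul1r -signr_odd hk expr1 mulrN1 mulNr oppr_lt0.
    by rewrite divr_gt0 // ltr0n ?fact_gt0 //; lia.
  rewrite /Ecoef (_ : (k.-1 < k)%N = true); last by lia.
  rewrite exprNn -signr_odd (_ : odd k.-1 = true); last first.
    by move: hk; case: k k2 => // k' _ /=; case: (odd k').
  by rewrite expr1 mulN1r mulNr oppr_lt0 divr_gt0 // ?exprn_gt0 // ltr0n fact_gt0.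
have lc : lead_coef p < 0.
  rewrite lead_coef_poly //; first by rewrite /N; case: ifP; lia.
  by rewrite lt_eqF.
have [n0 hn0] := @poly_pinfty_gt_lc R (- p) ltac:(by rewrite lead_coefN oppr_gt0).
pose x := Num.max n0 1.
have hx : p.[x] < 0.
  have := hn0 x; rewrite le_max lexx /= => /(_ isT).
  rewrite lead_coefN hornerN lerN2 => h; exact: (le_lt_trans h lc).
have x0 : 0 <= x by rewrite le_max ler01 orbT.
have [t0 ht0 rt0] := @poly_ivt R p 0 x x0 ltac:(by rewrite p0 mul1r ltW).
exists t0; split; last by rewrite -hp; exact/eqP.
rewrite lt_neqAle; move: ht0; rewrite in_itv /= => /andP[-> _]; rewrite andbT.
by apply/eqP => ht; move: rt0; rewrite /root -ht p0 oner_eq0.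
Qed.


End S8.

End P8.
Import P8.

Module P9.
Set Implicit Arguments.
Unset Strict Implicit.
Local Open Scope classical_set_scope.
Local Open Scope ring_scope.
Section S9.
Variable R : realType.
Variable w : R.
Hypothesis w0 : (0 < w)%R.
Variable k : nat.
Hypothesis k2 : (2 <= k)%N.
Variable n : nat.
Notation chi := (@chi R w).
Notation nu := (@nuF R n : {measure set (borel_of (@dR R)) -> \bar R}).
Local Open Scope ereal_scope.

Definition aa : R := ((n.+1)%:R * w)%R.

Lemma aa_gt0 : (0 < aa)%R.
Proof. by rewrite /aa mulr_gt0 // ltr0n. Qed.

Lemma nu_cellA : nu (cellA R w) = aa%:E.
Proof.
rewrite /= /nuF /cellA lebesgue_measure_itv /= lte_fin oppr_lt0 w0.
by rewrite -EFinB sub0r opprK -EFinM.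
Qed.

Lemma nu_cellB : nu (cellB R w) = aa%:E.
Proof.
rewrite /= /nuF /cellB lebesgue_measure_itv /= lte_fin w0.
by rewrite -EFinB subr0 -EFinM.
Qed.

Definition cR (m : nat) : R :=
  if (m < k)%N then ((aa + aa) ^+ m)%R
  else if m == k then ((odd k)%:R * (k%:R * aa ^+ k.-1 * aa))%R else 0%R.

Lemma eqJ m (f f' : seq nat -> \bar R) :
  (forall v, size v = m -> all (fun j => j < 2)%N v -> f v = f' v) ->
  J w nu m f = J w nu m f'.
Proof.
move=> h; apply: eq_iter => s hs hall; apply: h; first by rewrite size_map.
by rewrite all_map.
Qed.

Lemma gval_ge0 v : 0 <= gval R k v.
Proof. by rewrite /gval; case: ifP => //; case: ifP => //; case: ifP. Qed.

Lemma Zc m : Z_coeff nu (phi w k) (Lset w) m = (cR m)%:E.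
Proof.
rewrite /Z_coeff.
have -> : iter_integral nu (Lset w) m (fun s => expeR (- hamiltonian (phi w k) s))
    = J w nu m (gval R k).
  by apply: eq_iter => s _ hall; exact: E_val.
rewrite /cR; case: ltngtP => hm.
- rewrite (@J_cst _ _ _ aa aa nu_cellA nu_cellB m _ 1%R) ?mul1r //.
    by move=> v hv _; rewrite /gval hv hm.
  exact: gval_ge0.
- rewrite (@J_cst _ _ _ aa aa nu_cellA nu_cellB m _ 0%R) ?mul0r //.
    move=> v hv _; rewrite /gval hv ltnNge (ltnW hm) /=.
    by rewrite (gtn_eqF hm).
  exact: gval_ge0.
- subst m; case hk: (odd k).
    rewrite (@eqJ k _ (fc R 0)); last first.
      move=> v hv hall; rewrite /gval hv ltnn eqxx /bad hv eqxx hall hk /= /fc addn0.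
      by case: eqP.
    by rewrite (J_fc0 w0 (ltW aa_gt0) (ltW aa_gt0) nu_cellA nu_cellB) mul1r.
  rewrite (@J_cst _ _ _ aa aa nu_cellA nu_cellB k _ 0%R) ?mul0r //.
    by move=> v hv hall; rewrite /gval hv ltnn eqxx /bad hv eqxx hall hk.
  exact: gval_ge0.
Qed.

End S9.

End P9.
Import P9.

Module P10.
Set Implicit Arguments.
Unset Strict Implicit.
Local Open Scope classical_set_scope.
Local Open Scope ring_scope.
Section S10.
Variable R : realType.
Variable w : R.
Hypothesis w0 : (0 < w)%R.
Variable k : nat.
Hypothesis k2 : (2 <= k)%N.
Variable n : nat.
Notation nu := (@nuF R n : {measure set (borel_of (@dR R)) -> \bar R}).
Notation aa := (@aa R w n).

Lemma sum_trunc (F : nat -> R) N K : (K <= N)%N ->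
  (forall i, (K <= i)%N -> F i = 0) -> \sum_(i < N) F i = \sum_(i < K) F i.
Proof.
move=> hK hF; rewrite (big_ord_widen N F hK) [LHS](bigID (fun i : 'I_N => (i < K)%N)) /=.
rewrite [X in _ + X]big1 ?addr0 // => i hi; apply: hF; move: hi; rewrite -leqNgt; exact.
Qed.

Lemma psum (t0 : R) N : (k < N)%N ->
  \sum_(m < N) (- (t0 / aa)) ^+ m / (m`!)%:R * fine (Z_coeff nu (phi w k) (Lset w) m)
  = \sum_(i < k.+1) Ecoef R k i * t0 ^+ i.
Proof.
move=> hN.
have a0 : aa != 0 by rewrite gt_eqF // aa_gt0.
under eq_bigr do rewrite (Zc w0 k2) /=.
rewrite (@sum_trunc (fun i => (- (t0 / aa)) ^+ i / i`!%:R * cR w k n i) N k.+1) //; last first.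
  move=> i hi; rewrite /cR ltnNge (ltnW hi) /= gtn_eqF //.
  by rewrite mulr0.
apply: eq_bigr => -[i hi] _ /=; rewrite /cR /Ecoef.
case: (ltngtP i k) => hik.
- have e : (- (t0 / aa)) * (aa + aa) = (-2) * t0 by field.
  by rewrite mulrAC -exprMn e exprMn mulrAC.
- lia.
- subst i.
  have e : (- (t0 / aa)) ^+ k * aa ^+ k = (-1) ^+ k * t0 ^+ k.
    by rewrite -exprMn -exprMn; congr (_ ^+ _); field.
  have e' : (- (t0 / aa)) ^+ k * (aa ^+ k.-1 * aa) = (-1) ^+ k * t0 ^+ k.
    have kp : (0 < k)%N by lia.
    by rewrite -exprSr (prednK kp).
  transitivity ((odd k)%:R * k%:R / (k`!)%:R * ((- (t0 / aa)) ^+ k * (aa ^+ k.-1 * aa))).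
    ring.
  rewrite e'; ring.
Qed.

End S10.

End P10.
Import P10.

Module P11.
Set Implicit Arguments.
Unset Strict Implicit.
Local Open Scope classical_set_scope.
Local Open Scope ring_scope.
Section S11.
Variable R : realType.
Variable Rr : R.
Hypothesis Rr0 : (0 < Rr)%R.

Lemma nuF_A n : assumptionA (@nuF R n : {measure set (borel_of (@dR R)) -> \bar R}).
Proof.
move=> x A mA A0; rewrite /= /nuF /dR.
by rewrite (@lebesgue_abs_null R x A mA A0) mule0.
Qed.

Definition Bn (n : nat) : R := ((n.+1)%:R * (Rr *+ 2))%R.

Lemma Bval n : ball_volume_sup (@nuF R n : {measure set (borel_of (@dR R)) -> \bar R}) Rr
  = (Bn n)%:E.
Proof.
have h x : (@nuF R n) (dcball (@dR R) x Rr) = (Bn n)%:E.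
  rewrite /nuF (_ : dcball _ _ _ = closed_ball x Rr); last first.
    by rewrite closed_ballE.
  by rewrite lebesgue_measure_closed_ball ?(ltW Rr0) // -EFinM.
rewrite /ball_volume_sup.
have -> : range (fun x => (@nuF R n) (dcball (@dR R) x Rr)) = [set (Bn n)%:E].
  apply/seteqP; split => y /=; first by case=> x _ <-; rewrite h.
  by move=> ->; exists 0%R => //; rewrite h.
exact: ereal_sup1.
Qed.

Lemma Bn_oo : Bn n @[n --> \oo] --> +oo.
Proof.
apply/cvgryPge => A.
have hr := @cvgr_idn R; move/cvgryPge : hr => /(_ (A / (Rr *+ 2))).
apply: filterS => n hn; rewrite /Bn.
have r2 : (0 < Rr *+ 2)%R by rewrite pmulrn_rgt0.
rewrite -ler_pdivrMr //; apply: (le_trans hn).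
by rewrite ler_nat.
Qed.

End S11.


End P11.
Import P11.

Theorem mainTheorem10 (R : realType) (Rr : R) (k : nat) :
  0 < Rr -> (2 <= k)%N ->
  exists (X : nat -> pointedType) (d : forall n, X n -> X n -> R)
    (nu : forall n, {measure set (borel_of (d n)) -> \bar R})
    (phi : forall n, seq (X n) -> \bar R)
    (L : forall n, set (X n)) (lam : nat -> R),
    (forall n,
      [/\ is_metric (d n), metric_complete (d n), metric_separable (d n),
          locally_finite (nu n) & assumptionA (nu n)] /\
        [/\ potential_measurable (d n) (phi n), potential_symmetric (phi n),
              potential_repulsive (phi n), potential_range_le (d n) Rr (phi n)
            & potential_pure k (phi n)]) /\
    (forall n, measurable (L n : set (borel_of (d n))) /\ dbounded (d n) (L n)) /\
    (forall n, 0 < lam n) /\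
    (* (1) B_R^(n) -> +oo *)
    (ball_volume_sup (nu n) Rr @[n --> \oo] --> +oo%E) /\
    (* (2) lam_n = O(log B_R^(n) / B_R^(n)) *)
    (exists C : R, 0 < C /\
       \forall n \near \oo,
         ball_volume_sup (nu n) Rr \is a fin_num /\
         `|lam n| <= C * `| ln (fine (ball_volume_sup (nu n) Rr))
                            / fine (ball_volume_sup (nu n) Rr) |) /\
    (* (3) Z_{L_n, phi_n}(-lam_n) = 0 *)
    (forall n, partition_function_zero (nu n) (phi n) (L n) (- lam n)).
Proof.
move=> Rr0 k2.
have [t0 [t0p ht0]] := @root_exists R k k2.
have w0 : 0 < Rr / 2 by rewrite divr_gt0.
exists (fun _ => (R : pointedType)), (fun _ => @dR R),
  (fun n => (@nuF R n : {measure set (borel_of (@dR R)) -> \bar R})),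
  (fun _ => @phi R (Rr / 2) k), (fun _ => @Lset R (Rr / 2)),
  (fun n => t0 / aa (Rr / 2) n).
split; [|split; [|split; [|split; [|split]]]].
- move=> n; split; split.
  + exact: dR_metric.
  + exact: dR_complete.
  + exact: dR_separable.
  + exact: nuF_lf.
  + exact: nuF_A.
  + exact: phi_meas.
  + exact: phi_sym.
  + by move=> s; exact: hpot_ge0.
  + exact: phi_range.
  + exact: phi_pure.
- move=> n; split; first exact: mL.
  exists 0%R, Rr => y /Lchi /chi_lt2 hy; rewrite /dball /dR /= sub0r normrN; lra.
- by move=> n; rewrite divr_gt0 // aa_gt0.
- have -> : (fun n => ball_volume_sup (@nuF R n : {measure set (borel_of (@dR R)) -> \bar R}) Rr)
      = (fun n => (Bn Rr n)%:E) by apply/funext => n; exact: Bval.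
  by apply/cvgeryP; exact: Bn_oo.
- exists (4 * t0); split; first by rewrite mulr_gt0.
  have hB := Bn_oo Rr0; move/cvgryPge: hB => /(_ (expR 1)).
  apply: filterS => n hn; rewrite /= (Bval Rr0 n) /=; split => //.
  have aap := aa_gt0 w0 n.
  have hBa : Bn Rr n = 4 * aa (Rr / 2) n by rewrite /Bn /aa mulr2n; field.
  have hl : 1 <= ln (Bn Rr n).
    rewrite -(expRK 1) ler_ln ?posrE ?expR_gt0 //.
    exact: (lt_le_trans (expR_gt0 1) hn).
  have Bp : 0 < Bn Rr n by rewrite hBa mulr_gt0.
  rewrite (ger0_norm (ltW (divr_gt0 t0p aap))).
  rewrite ger0_norm; last by rewrite divr_ge0 // ?(ltW Bp) // (le_trans ler01 hl).
  move: hl; rewrite hBa; set l := ln _ => hl.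
  have -> : 4 * t0 * (l / (4 * aa (Rr / 2) n)) = t0 / aa (Rr / 2) n * l.
    by field; rewrite gt_eqF.
  rewrite -subr_ge0 (_ : t0 / aa (Rr / 2) n * l - t0 / aa (Rr / 2) n
     = t0 / aa (Rr / 2) n * (l - 1)); last by ring.
  by rewrite mulr_ge0 // ?subr_ge0 // ltW // divr_gt0.
- move=> n; split.
    by move=> m; rewrite (Zc w0 k2).
  apply: cvg_near_cst; apply: filterS (nbhs_infty_ge k.+1) => N hN.
  by rewrite (psum w0 k2).
Qed.
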